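(* Let $p$ be a prime and $Q\in\mathbb{Q}_p[X_1,\dots,X_n]$ any quadratic form. Then: (i) each of the sets $Q(\mathbb{Q}_p^n)\setminus\{0\}$ and $R(Q(\mathbb{Q}_p^n))\setminus\{0\}$ is a union of cosets of $(\mathbb{Q}_p^* )^2$ in $\mathbb{Q}_p^*$ (i.e. of elements of $\mathbb{Q}_p^*/(\mathbb{Q}_p^* )^2$); (ii) the set $R(Q(\mathbb{Z}^n))$ is dense in $\mathbb{Q}_p$ if and only if $R(Q(\mathbb{Q}_p^n))=\mathbb{Q}_p$.
   Context: A quadratic form is a homogeneous polynomial of degree two, not all coefficients zero. $\mathbb{Q}_p^*$ is the multiplicative group of $\mathbb{Q}_p$ and $(\mathbb{Q}_p^* )^2$ its subgroup of nonzero squares. For a subset $A$ of a field, $R(A)=\{a/b: a,b\in A,\ b\neq 0\}$. For $S\subseteq\mathbb{Q}_p^n$, $Q(S)=\{Q(\mathbf{x}):\mathbf{x}\in S\}$. Density is with respect to the $p$-adic topology. *)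

(* Defs.v *)
From HB Require Import structures.
From mathcomp Require Import all_boot all_order all_algebra.
From mathcomp Require Export mpoly.
Set Implicit Arguments. Unset Strict Implicit. Unset Printing Implicit Defensive.
Import Order.TTheory GRing.Theory Num.Theory.
Local Open Scope ring_scope.

Definition padic_abs_rat (p : nat) (q : rat) : rat :=
  if q == 0 then 0
  else (p%:R : rat) ^ ((logn p `|denq q|%N)%:Z - (logn p `|numq q|%N)%:Z).

(* (K, v) is (a model of) the field Q_p of p-adic numbers: K is a field
   (containing Q via ratr) with a non-archimedean absolute value v
   (values in Q, as those of |.|_p on Q_p are powers of p) extending |.|_p
   on Q, complete with respect to v, and in which Q is dense.
   This characterizes Q_p uniquely up to isometric field isomorphism
   (Q_p is by definition the completion of Q for |.|_p). *)
Definition is_Qp (p : nat) (K : fieldType) (v : K -> rat) : Prop :=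
  ((forall x, 0 <= v x) /\ (forall x, v x = 0 <-> x = 0)) /\
      (forall x y, v (x * y) = v x * v y) /\
      (forall x y, v (x + y) <= Num.max (v x) (v y)) /\
      (forall q : rat, v (ratr q) = padic_abs_rat p q) /\
      (forall u : nat -> K,
         (forall e : rat, 0 < e -> exists N, forall m k, (N <= m)%N -> (N <= k)%N ->
              v (u m - u k) < e) ->
         exists l, forall e : rat, 0 < e -> exists N, forall m, (N <= m)%N -> v (u m - l) < e) /\
    (forall (x : K) (e : rat), 0 < e -> exists q : rat, v (x - ratr q) < e).

Definition quadratic_form (K : fieldType) (n : nat) (Q : {mpoly K[n]}) : Prop :=
  Q != 0 /\ Q \is 2.-homog.

Definition qimage (K : fieldType) (n : nat) (Q : {mpoly K[n]})
  (S : ('I_n -> K) -> Prop) : K -> Prop :=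
  fun y => exists x, S x /\ y = Q.@[x].

Definition ratio_set (K : fieldType) (A : K -> Prop) : K -> Prop :=
  fun y => exists a b, A a /\ A b /\ b != 0 /\ y = a / b.

Definition setminus0 (K : fieldType) (A : K -> Prop) : K -> Prop :=
  fun y => A y /\ y != 0.

(* A is a union of cosets of (K^* )^2 in K^* : A ⊆ K^* and A is stable
   under multiplication by nonzero squares. *)
Definition union_of_square_classes (K : fieldType) (A : K -> Prop) : Prop :=
  (forall a, A a -> a != 0) /\
  (forall a c, A a -> c != 0 -> A (a * c ^+ 2)).

Definition dense_for (K : fieldType) (v : K -> rat) (A : K -> Prop) : Prop :=
  forall (x : K) (e : rat), 0 < e -> exists y, A y /\ v (x - y) < e.

Definition int_points (K : fieldType) (n : nat) : ('I_n -> K) -> Prop :=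
  fun x => exists z : 'I_n -> int, forall i, x i = (z i)%:~R.

(* Main.v *)
Require Import Defs.
From mathcomp Require Import all_boot all_order all_algebra.
From mathcomp Require Import mpoly ring lra.
Import Order.TTheory GRing.Theory Num.Theory.
Local Open Scope ring_scope.

Lemma homog2_scale (K : fieldType) n (Q : {mpoly K[n]}) (c : K) (x : 'I_n -> K) :
  Q \is 2.-homog -> Q.@[fun i => c * x i] = c ^+ 2 * Q.@[x].
Proof.
move=> /dhomogP h; rewrite !mevalE big_distrr /=.
apply: eq_big_seq => m /h hm; rewrite mulrCA; congr (_ * _).
under eq_bigr do rewrite exprMn.
by rewrite big_split /= prodrXr -mdegE hm.
Qed.

Lemma homog2_0 (K : fieldType) n (Q : {mpoly K[n]}) :
  Q \is 2.-homog -> Q.@[fun _ => 0] = 0.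
Proof.
move=> h; have := @homog2_scale K n Q 0 (fun _ => 0) h.
by rewrite expr2 !mul0r.
Qed.

Lemma part1 (K : fieldType) n (Q : {mpoly K[n]}) : Q \is 2.-homog ->
  union_of_square_classes (setminus0 (qimage Q (fun _ => True))) /\
  union_of_square_classes (setminus0 (ratio_set (qimage Q (fun _ => True)))).
Proof.
move=> h; split; split.
- by move=> a [].
- move=> a c [[x [_ ->]] nz] cnz; split; last by rewrite mulf_neq0 ?expf_neq0.
  by exists (fun i => c * x i); split => //; rewrite homog2_scale // mulrC.
- by move=> a [].
- move=> a c [[a1 [b1 [[x [_ ->]] [[y [_ ->]] [bnz ->]]]]] nz] cnz.
  split; last by rewrite mulf_neq0 ?expf_neq0.
  exists (Q.@[fun i => c * x i]), Q.@[y]; split; first by exists (fun i => c * x i).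
  split; first by exists y.
  split => //; rewrite homog2_scale //; ring.

Qed.
Section V.
Variables (p : nat) (hp : prime p) (K : fieldType) (v : K -> rat) (hK : is_Qp p v).

Lemma v_ge0 x : 0 <= v x. Proof. by case: hK => [[H _] _]. Qed.
Lemma v_eq0 x : v x = 0 <-> x = 0. Proof. by case: hK => [[_ H] _]. Qed.
Lemma vM x y : v (x * y) = v x * v y. Proof. by case: hK => [_ [H _]]. Qed.
Lemma vD x y : v (x + y) <= Num.max (v x) (v y). Proof. by case: hK => [_ [_ [H _]]]. Qed.
Lemma v_ratr q : v (ratr q) = padic_abs_rat p q. Proof. by case: hK => [_ [_ [_ [H _]]]]. Qed.
Lemma v_compl (u : nat -> K) :
  (forall e : rat, 0 < e -> exists N, forall m k, (N <= m)%N -> (N <= k)%N ->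
              v (u m - u k) < e) ->
  exists l, forall e : rat, 0 < e -> exists N, forall m, (N <= m)%N -> v (u m - l) < e.
Proof. by case: hK => [_ [_ [_ [_ [H _]]]]]; apply: H. Qed.
Lemma v_dense (x : K) (e : rat) : 0 < e -> exists q : rat, v (x - ratr q) < e.
Proof. by case: hK => [_ [_ [_ [_ [_ H]]]]]; apply: H. Qed.

Lemma v0 : v 0 = 0. Proof. by apply (proj2 (v_eq0 0)). Qed.
Lemma vgt0 x : x != 0 -> 0 < v x.
Proof. move=> h; rewrite lt_def v_ge0 andbT; apply/eqP => /v_eq0 /eqP; exact/negP. Qed.
Lemma vne0 x : x != 0 -> v x != 0.
Proof. by move=> /vgt0; rewrite lt0r => /andP[]. Qed.
Lemma v1 : v 1 = 1.
Proof.
have h := vM 1 1; rewrite mulr1 in h.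
have /vne0 nz : (1 : K) != 0 by exact: oner_neq0.
by apply: (mulIf nz); rewrite mul1r -h.
Qed.
Lemma vN1 : v (-1) = 1.
Proof.
have h := vM (-1) (-1); rewrite mulrNN mulr1 v1 in h.
have := v_ge0 (-1); move: h; set a := v (-1) => h ha.
have : (a - 1) * (a + 1) = 0 by rewrite mulrDr mulrBl -h; ring.
move/eqP; rewrite mulf_eq0 => /orP[]; first by rewrite subr_eq0 => /eqP.
rewrite addr_eq0 => /eqP ha1; move: ha; rewrite ha1 oppr_ge0 => /(le_lt_trans) /(_ ltr01).
by rewrite ltxx.
Qed.
Lemma vN x : v (- x) = v x. Proof. by rewrite -mulN1r vM vN1 mul1r. Qed.
Lemma vBC x y : v (x - y) = v (y - x). Proof. by rewrite -vN opprB. Qed.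
Lemma vV x : v (x^-1) = (v x)^-1.
Proof.
have [->|nz] := eqVneq x 0; first by rewrite invr0 v0 invr0.
have h := vM x x^-1; rewrite mulfV // v1 in h.
by rewrite -[RHS]mulr1 h mulrA mulVf ?mul1r // vne0.
Qed.
Lemma vDle x y e : v x <= e -> v y <= e -> v (x + y) <= e.
Proof. move=> a b; apply: le_trans (vD x y) _; by rewrite ge_max a b. Qed.
Lemma vDlt x y e : v x < e -> v y < e -> v (x + y) < e.
Proof. move=> a b; apply: le_lt_trans (vD x y) _; by rewrite gt_max a b. Qed.
Lemma vnat k : v k%:R <= 1.
Proof.
elim: k => [|k IH]; first by rewrite v0 ler01.
by rewrite -addn1 natrD vDle // v1.
Qed.
Lemma vp : v p%:R = p%:R^-1.
Proof.
have -> : (p%:R : K) = ratr ((p%:Z)%:~R) by rewrite ratr_int.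
rewrite v_ratr /padic_abs_rat numq_int denq_int.
have p0 : (p%:Z)%:~R != 0 :> rat by rewrite intr_eq0 eqz_nat gtn_eqF ?prime_gt0.
rewrite (negbTE p0) /= logn1 (logn_prime _ hp) eqxx.
by rewrite sub0r exprN1.
Qed.
Lemma vp_le : v p%:R <= 2^-1.
Proof.
rewrite vp lef_pV2 ?posrE ?ltr0n ?prime_gt0 //; by rewrite ler_nat prime_gt1.
Qed.
Lemma p_neq0 : (p%:R : K) != 0.
Proof. apply/negP => /eqP /v_eq0; rewrite vp => /eqP; rewrite invr_eq0 pnatr_eq0.
by rewrite gtn_eqF ?prime_gt0. Qed.


Lemma v_close a b : v (a - b) < v b -> v a = v b.
Proof.
move=> h; have h1 : v a <= v b.
  have -> : a = (a - b) + b by ring.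
  by apply: vDle => //; apply: ltW.
apply/eqP; rewrite eq_le h1 /=; rewrite leNgt; apply/negP => hab.
have : v b < v b; last by rewrite ltxx.
rewrite {1}(_ : b = a + (b - a)); last by ring.
by apply: vDlt => //; rewrite (vBC b a).
Qed.

Lemma v_small0 z : (forall e, 0 < e -> v z < e) -> z = 0.
Proof.
move=> h; apply/eqP; apply/negP => /negP nz.
by have := h _ (vgt0 z nz); rewrite ltxx.
Qed.

Variable n : nat.
Definition cont (f : ('I_n -> K) -> K) (x : 'I_n -> K) :=
  forall e, 0 < e -> exists2 d, 0 < d &
    forall y, (forall i, v (y i - x i) < d) -> v (f y - f x) < e.

Lemma cont_ext f g x : cont f x -> f =1 g -> cont g x.
Proof.
move=> h fg e e0; have [d d0 hd] := h e e0; exists d => // y hy.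
by rewrite -!fg; apply: hd.
Qed.
Arguments cont_ext {f g x}.

Lemma cont_const c x : cont (fun _ => c) x.
Proof. by move=> e e0; exists 1 => // y _; rewrite subrr v0. Qed.

Lemma cont_proj i x : cont (fun y => y i) x.
Proof. by move=> e e0; exists e. Qed.

Lemma cont_add f g x : cont f x -> cont g x -> cont (fun y => f y + g y) x.
Proof.
move=> hf hg e e0; have [d1 d10 h1] := hf e e0; have [d2 d20 h2] := hg e e0.
exists (Num.min d1 d2); first by rewrite lt_min d10 d20.
move=> y hy.
have -> : f y + g y - (f x + g x) = (f y - f x) + (g y - g x) by ring.
apply: vDlt; [apply: h1 | apply: h2] => i; have := hy i; rewrite lt_min => /andP[] //.
Qed.

Lemma cont_mul f g x : cont f x -> cont g x -> cont (fun y => f y * g y) x.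
Proof.
move=> hf hg e e0.
set M := v (f x) + v (g x) + 2.
have M0 : 0 < M by rewrite /M ltr_wpDl ?addr_ge0 ?v_ge0.
set e1 := Num.min 1 (e / M).
have e10 : 0 < e1 by rewrite lt_min ltr01 divr_gt0.
have [d1 d10 h1] := hf e1 e10; have [d2 d20 h2] := hg e1 e10.
exists (Num.min d1 d2); first by rewrite lt_min d10 d20.
move=> y hy.
have hf1 : v (f y - f x) < e1 by apply: h1 => i; have := hy i; rewrite lt_min => /andP[].
have hg1 : v (g y - g x) < e1 by apply: h2 => i; have := hy i; rewrite lt_min => /andP[].
have e1le1 : e1 <= 1 by rewrite ge_min lexx.
have e1M : e1 * M <= e by rewrite -ler_pdivlMr // ge_min lexx orbT.
have hgy : v (g y) <= v (g x) + 1.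
  have -> : g y = (g y - g x) + g x by ring.
  apply: le_trans (vD _ _) _; rewrite ge_max; apply/andP; split.
    by rewrite ler_wpDl ?v_ge0 // ltW // (lt_le_trans hg1).
  by rewrite lerDl ler01.
have -> : f y * g y - f x * g x = (f y - f x) * g y + f x * (g y - g x) by ring.
apply: lt_le_trans e1M; apply: vDlt; rewrite vM.
- apply: (@le_lt_trans _ _ (e1 * v (g y))).
    by rewrite ler_wpM2r ?v_ge0 // ltW.
  rewrite ltr_pM2l //; apply: le_lt_trans hgy _.
  by have := v_ge0 (f x); rewrite /M; lra.
- apply: (@le_lt_trans _ _ (v (f x) * e1)).
    by rewrite ler_wpM2l ?v_ge0 // ltW.
  rewrite mulrC ltr_pM2l //.
  by have := v_ge0 (g x); rewrite /M; lra.
Qed.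
Arguments cont_add {f g x}.
Arguments cont_mul {f g x}.

Lemma cont_sum (I : Type) (s : seq I) (F : I -> ('I_n -> K) -> K) x :
  (forall i, cont (F i) x) -> cont (fun y => \sum_(i <- s) F i y) x.
Proof.
move=> hF; elim: s => [|a s IH].
  by refine (cont_ext (cont_const 0 x) _) => y; rewrite big_nil.
refine (cont_ext (cont_add (hF a) IH) _) => y; by rewrite big_cons.
Qed.

Lemma cont_prod (I : Type) (s : seq I) (F : I -> ('I_n -> K) -> K) x :
  (forall i, cont (F i) x) -> cont (fun y => \prod_(i <- s) F i y) x.
Proof.
move=> hF; elim: s => [|a s IH].
  by refine (cont_ext (cont_const 1 x) _) => y; rewrite big_nil.
refine (cont_ext (cont_mul (hF a) IH) _) => y; by rewrite big_cons.
Qed.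

Lemma cont_exp f k x : cont f x -> cont (fun y => f y ^+ k) x.
Proof.
move=> hf; elim: k => [|k IH].
  by refine (cont_ext (cont_const 1 x) _) => y; rewrite expr0.
refine (cont_ext (cont_mul hf IH) _) => y; by rewrite exprS.
Qed.
Arguments cont_exp {f} k {x}.

Lemma cont_poly (Q : {mpoly K[n]}) x : cont (fun y => Q.@[y]) x.
Proof.
apply: (@cont_ext (fun y => \sum_(m <- msupp Q) Q@_m * \prod_i y i ^+ m i)).
  2: by move=> y; rewrite mevalE.
apply: cont_sum => m; apply: cont_mul; first exact: cont_const.
apply: cont_prod => i; apply: cont_exp; exact: cont_proj.
Qed.

Lemma ratio_near (A B : K) e : B != 0 -> 0 < e -> exists2 d, 0 < d &
  forall a b, v (a - A) < d -> v (b - B) < d -> b != 0 /\ v (a / b - A / B) < e.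
Proof.
move=> Bnz e0; have vB0 := vgt0 B Bnz; have vA0 := v_ge0 A.
have S0 : 0 < v A + v B by rewrite ltr_wpDl.
exists (Num.min (v B) (e * (v B * v B) / (v A + v B))).
  by rewrite lt_min vB0 /= divr_gt0 // mulr_gt0 // mulr_gt0.
move=> a b ha hb.
have hb1 : v (b - B) < v B by move: hb; rewrite lt_min => /andP[].
have hb2 : v (b - B) < e * (v B * v B) / (v A + v B) by move: hb; rewrite lt_min => /andP[].
have ha2 : v (a - A) < e * (v B * v B) / (v A + v B) by move: ha; rewrite lt_min => /andP[].
have vbB := v_close b B hb1.
have bnz : b != 0 by apply/negP => /eqP b0; move: vB0; rewrite -vbB b0 v0 ltxx.
split => //.
have -> : a / b - A / B = ((a - A) * B - A * (b - B)) / (b * B) by field; apply/andP.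
rewrite vM vV vM vbB ltr_pdivrMr ?mulr_gt0 //.
set d := e * (v B * v B) / (v A + v B) in ha2 hb2.
have d0 : 0 < d by rewrite /d divr_gt0 // mulr_gt0 // mulr_gt0.
have -> : e * (v B * v B) = d * (v A + v B) by rewrite /d mulfVK // gt_eqF.
apply: vDlt; rewrite ?vN vM.
- apply: (@lt_le_trans _ _ (d * v B)); first by rewrite ltr_pM2r.
  by rewrite ler_pM2l // lerDr.
- apply: (@le_lt_trans _ _ (v A * d)); first by rewrite ler_wpM2l // ltW.
  by rewrite mulrC ltr_pM2l // ltrDl.
Qed.

Lemma approx (x : 'I_n -> K) d : 0 < d -> exists q : 'I_n -> rat, forall i, v (ratr (q i) - x i) < d.
Proof.
move=> d0.
have ex i : exists q : rat, v (ratr q - x i) < d.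
  by have [q hq] := v_dense (x i) d d0; exists q; rewrite vBC.
exists (fun i => xchoose (ex i)) => i; exact: (xchooseP (ex i)).
Qed.

Lemma ratr_neq0 (q : rat) : q != 0 -> (ratr q : K) != 0.
Proof.
move=> qnz; apply/negP => /eqP /(f_equal v); rewrite v_ratr v0 /padic_abs_rat (negbTE qnz).
move/eqP; rewrite expfz_eq0 pnatr_eq0 gtn_eqF ?prime_gt0 ?andbF //.
Qed.

Lemma intr_neq0 (z : int) : z != 0 -> (z%:~R : K) != 0.
Proof. by move=> h; rewrite -ratr_int ratr_neq0 // intr_eq0. Qed.


Lemma half_pow (e : rat) : 0 < e -> exists N : nat, (2^-1 : rat) ^+ N < e.
Proof.
move=> e0; exists (Num.Def.archi_bound e^-1).
set N := Num.Def.archi_bound e^-1.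
have h1 : e^-1 < N%:R by apply: archi_boundP; rewrite invr_ge0 ltW.
have h2 : (N%:R : rat) <= 2 ^+ N by rewrite -natrX ler_nat ltnW // ltn_expl.
rewrite exprVn -[e]invrK ltf_pV2 ?posrE ?exprn_gt0 ?invr_gt0 //.
exact: lt_le_trans h1 h2.
Qed.

Lemma sqrt8 w : v w <= 1 -> exists s, s ^+ 2 = 1 + 8%:R * p%:R * w.
Proof.
move=> hw.
set c := 2%:R * p%:R * w.
have hc : v c <= 2^-1.
  rewrite /c !vM; have := vnat 2; have := vp_le; have := v_ge0 w.
  have := v_ge0 2%:R; have := v_ge0 p%:R => ? ? ? ? ?.
  rewrite -[2^-1]mul1r -[_ * 2^-1]mulr1; apply: ler_pM => //; first by rewrite mulr_ge0.
  by apply: ler_pM.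
pose a k := iter k (fun t => c - t ^+ 2) 0.
have aS k : a k.+1 = c - a k ^+ 2 by [].
have ha k : v (a k) <= 2^-1.
  elim: k => [|k IH]; first by rewrite /a /= v0.
  rewrite aS; apply: vDle => //; rewrite vN expr2 vM.
  have := v_ge0 (a k) => ?.
  apply: le_trans (ler_pM _ _ IH IH) _ => //; lra.
have hd k : v (a k.+1 - a k) <= (2^-1) ^+ k.+1.
  elim: k => [|k IH]; first by rewrite aS /a /= expr0n subr0 subr0 expr1.
  have -> : a k.+2 - a k.+1 = (a k - a k.+1) * (a k + a k.+1).
    by rewrite (aS k.+1) (aS k); ring.
  rewrite vM exprSr (vBC (a k)); apply: ler_pM; rewrite ?v_ge0 //.
  by apply: vDle.
have hc2 k j : v (a (k + j)%N - a k) <= (2^-1) ^+ k.+1.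
  elim: j => [|j IH]; first by rewrite addn0 subrr v0 exprn_ge0.
  have -> : a (k + j.+1)%N - a k = (a (k + j)%N.+1 - a (k + j)%N) + (a (k + j)%N - a k).
    by rewrite addnS; ring.
  apply: vDle => //; apply: le_trans (hd _) _.
  by apply: ler_wiXn2l; rewrite ?invr_ge0 ?invf_le1 ?ler0n ?ler1n // ltnS leq_addr.
have [l hl] : exists l, forall e : rat, 0 < e -> exists N, forall m, (N <= m)%N -> v (a m - l) < e.
  apply: v_compl => e e0; have [N hN] := half_pow e e0; exists N => m k hm hk.
  have hb i : (N <= i)%N -> v (a i - a N) < e.
    move=> hi; rewrite -(subnKC hi); apply: le_lt_trans (hc2 _ _) _.
    apply: le_lt_trans hN; apply: ler_wiXn2l => //; rewrite ?invr_ge0 ?invf_le1 ?ler0n ?ler1n //.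
  have -> : a m - a k = (a m - a N) + - (a k - a N) by ring.
  by apply: vDlt; rewrite ?vN; apply: hb.
have hlc : l + l ^+ 2 = c.
  apply/eqP; rewrite -subr_eq0; apply/eqP; apply: v_small0 => e e0.
  have [N hN] := hl (Num.min e 1) (ltac:(by rewrite lt_min e0 ltr01)).
  have h1 := hN N.+1 (leqnSn N); have h2 := hN N (leqnn N).
  rewrite lt_min in h1; rewrite lt_min in h2.
  case/andP: h1 => h1 _; case/andP: h2 => h2 h2'.
  have -> : l + l ^+ 2 - c = - (a N.+1 - l) + (l - a N) * (l + a N) by rewrite aS; ring.
  apply: vDlt; first by rewrite vN.
  have h3 : v (l + a N) <= 1.
    have -> : l + a N = - (a N - l) + (a N + a N) by ring.
    apply: vDle; first by rewrite vN ltW.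
    by apply: vDle; apply: le_trans (ha N) _; rewrite invf_le1 ?ler1n.
  rewrite vM (vBC l); apply: le_lt_trans h2.
  by rewrite -[X in _ <= X]mulr1 ler_wpM2l ?v_ge0.
exists (1 + 2%:R * l).
have -> : (1 + 2%:R * l) ^+ 2 = 1 + 4%:R * (l + l ^+ 2) by ring.
by rewrite hlc /c; ring.
Qed.


Lemma int_scale (q : 'I_n -> rat) (P : int) i :
  exists z : int, ((\prod_j denq (q j)) * P)%:~R * (ratr (q i) : K) = z%:~R.
Proof.
exists (numq (q i) * (\prod_(j | j != i) denq (q j)) * P).
rewrite (bigD1 i) //= /ratr !intrM.
have dnz : ((denq (q i))%:~R : K) != 0 by apply: intr_neq0; exact: denq_neq0.
by field.
Qed.

Lemma dir1 (Q : {mpoly K[n]}) : Q \is 2.-homog ->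
  (forall y, ratio_set (qimage Q (fun _ => True)) y) ->
  dense_for v (ratio_set (qimage Q (@int_points K n))).
Proof.
move=> hQ H x e e0.
have [a [b [[ua [_ ->]] [[ub [_ ->]] [bnz ->]]]]] := H x.
have [d d0 hd] := ratio_near (Q.@[ua]) (Q.@[ub]) e bnz e0.
have [d1 d10 h1] := cont_poly Q ua d d0.
have [d2 d20 h2] := cont_poly Q ub d d0.
have [qa hqa] := approx ua d1 d10.
have [qb hqb] := approx ub d2 d20.
set xa := fun i => (ratr (qa i) : K).
set xb := fun i => (ratr (qb i) : K).
have [bnz' hv] := hd (Q.@[xa]) (Q.@[xb]) (h1 xa hqa) (h2 xb hqb).
set Pa := \prod_j denq (qa j); set Pb := \prod_j denq (qb j).
set c : K := (Pa * Pb)%:~R.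
have cnz : c != 0.
  apply: intr_neq0; rewrite mulf_neq0 //; apply/prodf_neq0 => i _; exact: denq_neq0.
have hia : int_points (fun i => c * xa i).
  have hz i : exists z : int, c * xa i == z%:~R.
    by have [z hz] := int_scale qa Pb i; exists z; apply/eqP; rewrite -hz.
  exists (fun i => xchoose (hz i)); move=> i; apply/eqP; exact: (xchooseP (hz i)).
have hib : int_points (fun i => c * xb i).
  have hz i : exists z : int, c * xb i == z%:~R.
    by have [z hz] := int_scale qb Pa i; exists z; apply/eqP; rewrite -hz /c [(Pa * Pb)%R]mulrC.
  exists (fun i => xchoose (hz i)); move=> i; apply/eqP; exact: (xchooseP (hz i)).
exists (Q.@[fun i => c * xa i] / Q.@[fun i => c * xb i]); split.
  exists (Q.@[fun i => c * xa i]), (Q.@[fun i => c * xb i]).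
  split; first by exists (fun i => c * xa i).
  split; first by exists (fun i => c * xb i).
  by split => //; rewrite homog2_scale // mulf_neq0 // expf_neq0.
rewrite !homog2_scale // -mulf_div divff ?mul1r ?expf_neq0 //.
by rewrite vBC.
Qed.


Lemma dir2 (Q : {mpoly K[n]}) : Q \is 2.-homog ->
  dense_for v (ratio_set (qimage Q (@int_points K n))) ->
  (forall y, ratio_set (qimage Q (fun _ => True)) y).
Proof.
move=> hQ Hd y.
have [->|ynz] := eqVneq y 0.
  have [z [[a [b [[xa [_ ->]] [[xb [_ ->]] [bnz _]]]]] _]] := Hd 0 1 ltr01.
  exists 0, (Q.@[xb]); split; first by exists (fun _ => 0); rewrite homog2_0.
  split; first by exists xb.
  by split => //; rewrite mul0r.
set k8 : K := 8%:R * p%:R.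
have k8nz : k8 != 0.
  rewrite mulf_neq0 ?p_neq0 //.
  by rewrite -(ratr_nat K 8) ratr_neq0.
have vk8 : 0 < v k8 by apply: vgt0.
have vk81 : v k8 <= 1.
  rewrite /k8 vM; apply: le_trans (ler_pM _ _ (vnat 8) (vp_le)) _; rewrite ?v_ge0 //.
have e0 : 0 < v y * v k8 by rewrite mulr_gt0 // vgt0.
have [zz [[a [b [[xa [_ ->]] [[xb [_ ->]] [bnz ->]]]]] hz]] := Hd y _ e0.
set z := Q.@[xa] / Q.@[xb] in hz *.
have hz1 : v (y - z) < v y by apply: lt_le_trans hz _; rewrite ler_piMr ?v_ge0.
have vz : v z = v y by apply: v_close; rewrite vBC.
have znz : z != 0 by apply/negP => /eqP z0; move: vz; rewrite z0 v0 => /esym/v_eq0/eqP; rewrite (negbTE ynz).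
set w := (y - z) / (z * k8).
have hw : v w <= 1.
  rewrite /w vM vV vM vz ler_pdivrMr ?mulr_gt0 ?vgt0 // mul1r.
  exact: ltW hz.
have [s hs] := sqrt8 w hw.
have ey : y = z * s ^+ 2.
  rewrite hs -/k8 /w; field.
  by rewrite znz k8nz.
exists (Q.@[fun i => s * xa i]), (Q.@[xb]); split; first by exists (fun i => s * xa i).
split; first by exists xb.
split => //; rewrite homog2_scale // ey /z; field.
by [].
Qed.

End V.

Theorem lemma3 (p : nat) (hp : prime p) (K : fieldType) (v : K -> rat)
  (hK : @is_Qp p K v) (n : nat) (Q : {mpoly K[n]}) (hQ : quadratic_form Q) :
  [/\ union_of_square_classes (setminus0 (qimage Q (fun _ => True))),
      union_of_square_classes (setminus0 (ratio_set (qimage Q (fun _ => True))))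
    & (dense_for v (ratio_set (qimage Q (@int_points K n)))
       <-> (forall y : K, ratio_set (qimage Q (fun _ => True)) y))].
Proof.
case: hQ => _ h2.
have [i1 i2] := @part1 K n Q h2.
split => //; split.
  exact: (@dir2 p hp K v hK n Q h2).
exact: (@dir1 p hp K v hK n Q h2).
Qed.
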